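(* Let $f$, $g$, $\xi$, $F$ satisfy the standing assumptions below, and let $x$ be the unique continuous solution of $x'(t)=-f(x(t))+g(t)$, $t>0$, $x(0)=\xi$. Suppose there exist $\delta>0$ and a function $\phi$ increasing on $(0,\delta)$ with $\lim_{x\to0^+}f(x)/\phi(x)=1$, that \[ \lim_{t\to\infty}\frac{g(t)}{f(F^{-1}(t))}=+\infty, \] and that $x(t)\to0$ as $t\to\infty$. If either $f\in\mathrm{RV}_0(\beta)$ for some $\beta>1$, or $f\circ F^{-1}\in\mathrm{RV}_\infty(-1)$, then \[ \lim_{t\to\infty}\frac{F(x(t))}{t}=0. \]
   Context: Standing assumptions: $f\in C(\mathbb{R};\mathbb{R})$ is locally Lipschitz continuous on $\mathbb{R}$, $f(0)=0$ and $xf(x)>0$ for $x\neq0$; $g\in C([0,\infty);\mathbb{R})$ with $g(t)>0$ for $t>0$; $\xi>0$. $F(x)=\int_x^1 \frac{du}{f(u)}$ for $x>0$, with $\lim_{x\to0^+}F(x)=+\infty$; $F^{-1}$ is the inverse of the strictly decreasing function $F$. $\mathrm{RV}_0(\beta)$: measurable positive $\varphi$ on $(0,\infty)$ with $\varphi(\lambda x)/\varphi(x)\to\lambda^\beta$ as $x\to0^+$ for every $\lambda>0$. $\mathrm{RV}_\infty(\alpha)$: measurable positive $h$ with $h(\lambda t)/h(t)\to\lambda^\alpha$ as $t\to\infty$ for every $\lambda>0$. *)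

(* Defs.v *)
From Stdlib Require Export Reals.
Open Scope R_scope.

Definition loc_lipschitz (f : R -> R) : Prop :=
  forall a b : R, exists L : R, forall x y : R,
    a <= x <= b -> a <= y <= b -> Rabs (f x - f y) <= L * Rabs (x - y).

Definition cont_on_nonneg (h : R -> R) : Prop :=
  forall t : R, 0 <= t -> forall eps : R, 0 < eps -> exists d : R, 0 < d /\
    forall s : R, 0 <= s -> Rabs (s - t) < d -> Rabs (h s - h t) < eps.

Definition lim_0plus (h : R -> R) (l : R) : Prop :=
  forall eps : R, 0 < eps -> exists d : R, 0 < d /\
    forall x : R, 0 < x < d -> Rabs (h x - l) < eps.

Definition lim_0plus_infty (h : R -> R) : Prop :=
  forall M : R, exists d : R, 0 < d /\ forall x : R, 0 < x < d -> M < h x.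

Definition lim_infty (h : R -> R) (l : R) : Prop :=
  forall eps : R, 0 < eps -> exists T : R,
    forall t : R, T < t -> Rabs (h t - l) < eps.

Definition lim_infty_infty (h : R -> R) : Prop :=
  forall M : R, exists T : R, forall t : R, T < t -> M < h t.

(* RV_0(beta): positive on (0,oo), phi(lam x)/phi(x) -> lam^beta as x -> 0+.
   (Measurability is automatic for the continuous functions used here.) *)
Definition RV0 (beta : R) (phi : R -> R) : Prop :=
  (forall x : R, 0 < x -> 0 < phi x) /\
  forall lam : R, 0 < lam ->
    lim_0plus (fun x => phi (lam * x) / phi x) (Rpower lam beta).

Definition RVinf (alpha : R) (h : R -> R) : Prop :=
  (forall t : R, 0 < t -> 0 < h t) /\
  forall lam : R, 0 < lam ->
    lim_infty (fun t => h (lam * t) / h t) (Rpower lam alpha).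

(* Main.v *)
Require Import Defs.
From Stdlib Require Import Reals Lra Ranalysis5.
From Coquelicot Require Import Coquelicot.
Open Scope R_scope.

Lemma lip_cont (f : R -> R) : loc_lipschitz f -> forall x, continuity_pt f x.
Proof.
  intros Hl x0 eps Heps.
  destruct (Hl (x0 - 1) (x0 + 1)) as [L HL].
  exists (Rmin 1 (eps / (Rabs L + 1))). split.
  - apply Rmin_pos; [lra|]. apply Rdiv_lt_0_compat; [lra|]. pose proof (Rabs_pos L); lra.
  - intros y [_ Hy]. simpl in *. unfold R_dist in *.
    pose proof (Rmin_l 1 (eps / (Rabs L + 1))) as H1.
    pose proof (Rmin_r 1 (eps / (Rabs L + 1))) as H2.
    assert (Hy1 : Rabs (y - x0) < 1) by lra.
    apply Rabs_def2 in Hy1.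
    assert (HH := HL y x0 ltac:(lra) ltac:(lra)).
    assert (L * Rabs (y - x0) <= Rabs L * Rabs (y - x0)).
    { apply Rmult_le_compat_r; [apply Rabs_pos| apply RRle_abs]. }
    assert (Rabs L * Rabs (y - x0) < eps).
    { assert (Q1 : Rabs (y - x0) < eps / (Rabs L + 1)) by lra.
      assert (Q2 : 0 < Rabs L + 1) by (pose proof (Rabs_pos L); lra).
      apply Rmult_lt_compat_l with (r := Rabs L + 1) in Q1; [|lra].
      replace ((Rabs L + 1) * (eps / (Rabs L + 1))) with eps in Q1 by (field; lra).
      pose proof (Rabs_pos (y - x0)). nra. }
    lra.
Qed.

Lemma f_pos (f : R -> R) : (forall u, u <> 0 -> 0 < u * f u) -> forall u, 0 < u -> 0 < f u.
Proof.
  intros H u Hu. specialize (H u ltac:(lra)).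
  destruct (Rlt_or_le 0 (f u)); auto. nra.
Qed.

Lemma h_cont (f : R -> R) : loc_lipschitz f -> (forall u, u <> 0 -> 0 < u * f u) ->
  forall u, 0 < u -> continuous (fun v => / f v) u.
Proof.
  intros Hl Hs u Hu. apply continuity_pt_filterlim.
  apply (continuity_pt_inv f u (lip_cont f Hl u)).
  pose proof (f_pos f Hs u Hu). lra.
Qed.

Lemma exR (f : R -> R) : loc_lipschitz f -> (forall u, u <> 0 -> 0 < u * f u) ->
  forall p q, 0 < p -> 0 < q -> ex_RInt (fun v => / f v) p q.
Proof.
  intros Hl Hs p q Hp Hq. apply (@ex_RInt_continuous R_CompleteNormedModule). intros z Hz.
  apply (h_cont f Hl Hs).
  destruct (Rle_dec p q); [rewrite Rmin_left in Hz by lra | rewrite Rmin_right in Hz by lra]; lra.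
Qed.

Lemma F_RInt (f F : R -> R) :
  (forall u : R, 0 < u ->
     exists pr : Riemann_integrable (fun v => / f v) u 1, F u = RiemannInt pr) ->
  forall u, 0 < u -> F u = RInt (fun v => / f v) u 1.
Proof.
  intros H u Hu. destruct (H u Hu) as [pr E]. rewrite E. symmetry; apply RInt_Reals.
Qed.
Definition Std (f F : R -> R) : Prop :=
  loc_lipschitz f /\ (forall u, u <> 0 -> 0 < u * f u) /\
  (forall u, 0 < u -> F u = RInt (fun v => / f v) u 1).

Lemma F_diff f F : Std f F -> forall u v, 0 < u -> 0 < v ->
  F u - F v = RInt (fun w => / f w) u v.
Proof.
  intros [Hl [Hs HF]] u v Hu Hv. rewrite !HF by lra.
  rewrite <- (RInt_Chasles (fun w => / f w) u v 1).
  - change (plus ?a ?b) with (a + b). ring.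
  - apply exR; auto.
  - apply exR; auto; lra.
Qed.

Lemma F_mono f F : Std f F -> forall u v, 0 < u -> u <= v -> F v <= F u.
Proof.
  intros S u v Hu Huv. pose proof (F_diff f F S u v Hu ltac:(lra)).
  destruct S as [Hl [Hs HF]].
  assert (0 <= RInt (fun w => / f w) u v).
  { apply RInt_ge_0; auto. apply exR; auto; lra.
    intros x Hx. pose proof (f_pos f Hs x ltac:(lra)). left; apply Rinv_0_lt_compat; auto. }
  lra.
Qed.

Lemma F_one f F : Std f F -> F 1 = 0.
Proof.
  intros [Hl [Hs HF]]. rewrite HF by lra. apply (@RInt_point R_CompleteNormedModule).
Qed.

Lemma F_nonneg f F : Std f F -> forall u, 0 < u <= 1 -> 0 <= F u.
Proof.
  intros S u Hu. rewrite <- (F_one f F S). apply (F_mono f F S); lra.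
Qed.

Lemma F_deriv f F : Std f F -> forall u, 0 < u -> derivable_pt_lim F u (- / f u).
Proof.
  intros [Hl [Hs HF]] u Hu. apply is_derive_Reals.
  apply (is_derive_ext_loc (fun a => RInt (fun v => / f v) a 1)).
  - exists (mkposreal (u/2) ltac:(lra)). intros y Hy.
    change (Rabs (y - u) < u / 2) in Hy. apply Rabs_def2 in Hy.
    symmetry; apply HF; lra.
  - apply (is_derive_RInt' (fun v => / f v) _ u 1).
    + exists (mkposreal (u/2) ltac:(lra)). intros y Hy.
      change (Rabs (y - u) < u / 2) in Hy. apply Rabs_def2 in Hy.
      apply (@RInt_correct R_CompleteNormedModule). apply exR; auto; lra.
    + apply h_cont; auto.
Qed.

Lemma F_cont f F : Std f F -> forall u, 0 < u -> continuity_pt F u.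
Proof.
  intros S u Hu. apply derivable_continuous_pt. exists (- / f u). apply F_deriv; auto.
Qed.

Lemma F_surj f F Finv : Std f F -> lim_0plus_infty F ->
  (forall u : R, 0 < u -> Finv (F u) = u) ->
  forall s, 0 < s -> 0 < Finv s /\ F (Finv s) = s.
Proof.
  intros S H0 Hinv s Hs. destruct (H0 s) as [d [Hd Hy]].
  set (y := Rmin (d/2) (1/2)).
  assert (Hy1 : 0 < y) by (apply Rmin_pos; lra).
  assert (Hy2 : y < 1) by (pose proof (Rmin_r (d/2) (1/2)); unfold y in *; lra).
  assert (Hy3 : s < F y) by (apply Hy; pose proof (Rmin_l (d/2) (1/2)); unfold y in *; lra).
  destruct (IVT_interv (fun z => s - F z) y 1) as [z [Hz1 Hz2]].
  - intros a Ha. apply (continuity_pt_minus (fun _ => s) F a). apply continuity_pt_const; intros ? ?; auto.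
    apply (F_cont f F S); lra.
  - lra.
  - lra.
  - rewrite (F_one f F S). lra.
  - assert (F z = s) by lra. rewrite <- H. rewrite Hinv by lra. split; lra.
Qed.

Lemma Finv_small f F Finv : Std f F -> lim_0plus_infty F ->
  (forall u : R, 0 < u -> Finv (F u) = u) ->
  forall y, 0 < y -> exists T, forall s, T < s -> 0 < Finv s < y.
Proof.
  intros S H0 Hinv y Hy. exists (Rmax (F y) 0). intros s Hs.
  pose proof (Rmax_l (F y) 0). pose proof (Rmax_r (F y) 0).
  destruct (F_surj f F Finv S H0 Hinv s ltac:(lra)) as [P E].
  split; auto. destruct (Rlt_or_le (Finv s) y); auto.
  pose proof (F_mono f F S y (Finv s) Hy H2). lra.
Qed.
Lemma crossing (w w' : R -> R) (a m : R) :
  (forall t, a <= t -> derivable_pt_lim w t (w' t)) ->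
  w a < m ->
  (forall t, a <= t -> w t = m -> w' t < 0) ->
  forall t, a <= t -> w t < m.
Proof.
  intros Hd Ha Hneg t1 Ht1.
  destruct (Rlt_or_le (w t1) m) as [Hlt|Hge]; auto. exfalso.
  set (E := fun s => a <= s <= t1 /\ forall r, a <= r <= s -> w r < m).
  assert (Eb : bound E) by (exists t1; intros s [Hs _]; lra).
  assert (Ea : E a) by (split; [lra| intros r Hr; replace r with a by lra; auto]).
  destruct (completeness E Eb (ex_intro _ a Ea)) as [s0 [Hub Hlub]].
  assert (Hs0a : a <= s0) by (apply Hub; auto).
  assert (Hs0t : s0 <= t1) by (apply Hlub; intros s [Hs _]; lra).
  assert (P : forall r, a <= r < s0 -> w r < m).
  { intros r Hr. destruct (Classical_Prop.classic (exists s, E s /\ r < s)) as [[s [[_ Hs] Hrs]]|Hn].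
    - apply Hs; lra.
    - exfalso. assert (s0 <= r); [|lra]. apply Hlub. intros s Es.
      destruct (Rlt_or_le r s); auto. exfalso; apply Hn; eauto. }
  assert (Hc : continuity_pt w s0) by (apply derivable_continuous_pt; exists (w' s0); apply Hd; lra).
  destruct (Rtotal_order (w s0) m) as [Hl|[He|Hg]].
  - destruct (Hc (m - w s0) ltac:(lra)) as [d [Hd0 Hd1]].
    assert (Hnear : forall r, Rabs (r - s0) < d -> w r < m).
    { intros r Hr. destruct (Req_dec r s0) as [->|Hne]; auto.
      assert (Q := Hd1 r (conj (conj I (not_eq_sym Hne)) Hr)). simpl in Q. unfold R_dist in Q.
      apply Rabs_def2 in Q. lra. }
    destruct (Req_dec s0 t1) as [->|Hne]; [lra|].
    set (s' := Rmin (s0 + d/2) t1).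
    assert (s0 < s') by (unfold s'; apply Rmin_glb_lt; lra).
    assert (Hs1 : s' <= s0 + d/2) by apply Rmin_l.
    assert (Hs2 : s' <= t1) by apply Rmin_r.
    assert (Es' : E s').
    { split. split; lra. intros r Hr.
      destruct (Rlt_or_le r s0). apply P; lra. apply Hnear.
      apply Rabs_def1; lra. }
    pose proof (Hub s' Es'). lra.
  - assert (a < s0) by (destruct (Req_dec a s0) as [<-|]; [lra|lra]).
    assert (Hw : w' s0 < 0) by (apply Hneg; lra).
    destruct (Hd s0 ltac:(lra) (- w' s0 / 2) ltac:(lra)) as [d Hdd].
    set (h := - Rmin (d/2) ((s0 - a)/2)).
    assert (Hh1 : 0 < Rmin (d/2) ((s0 - a)/2)) by (apply Rmin_pos; [destruct d; simpl; lra| lra]).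
    pose proof (Rmin_l (d/2) ((s0 - a)/2)). pose proof (Rmin_r (d/2) ((s0 - a)/2)).
    assert (Hh : h <> 0) by (unfold h; lra).
    assert (Habs : Rabs h < d) by (unfold h; rewrite Rabs_Ropp, Rabs_pos_eq; destruct d; simpl in *; lra).
    specialize (Hdd h Hh Habs). apply Rabs_def2 in Hdd.
    assert (Pr : w (s0 + h) < m) by (apply P; unfold h; lra).
    set (q := (w (s0 + h) - w s0) / h) in *.
    assert (w (s0 + h) - w s0 = q * h) by (unfold q; field; auto).
    assert (h < 0) by (unfold h; lra).
    assert (q < 0) by lra. nra.
  - assert (a < s0) by (destruct (Req_dec a s0) as [<-|]; [lra|lra]).
    destruct (Hc (w s0 - m) ltac:(lra)) as [d [Hd0 Hd1]].
    set (r := Rmax a (s0 - d/2)).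
    assert (r < s0) by (unfold r; apply Rmax_lub_lt; lra).
    assert (a <= r) by apply Rmax_l.
    assert (s0 - d/2 <= r) by apply Rmax_r.
    assert (N1 : s0 <> r) by (intro; lra).
    assert (N2 : Rabs (r - s0) < d) by (apply Rabs_def1; lra).
    assert (Q := Hd1 r (conj (conj I N1) N2)).
    simpl in Q. unfold R_dist in Q. apply Rabs_def2 in Q.
    pose proof (P r ltac:(lra)). lra.
Qed.
Lemma QM (f : R -> R) :
  (forall u, 0 < u -> 0 < f u) ->
  (exists (delta : R) (phi : R -> R), 0 < delta /\
     (forall a b : R, 0 < a -> a <= b -> b < delta -> phi a <= phi b) /\
     lim_0plus (fun u => f u / phi u) 1) ->
  exists d1, 0 < d1 /\ forall a b, 0 < a -> a <= b -> b < d1 -> f a <= 3 * f b.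
Proof.
  intros Hp [delta [phi [Hdel [Hm Hl]]]].
  destruct (Hl (1/2) ltac:(lra)) as [d [Hd Hd1]].
  assert (K : forall u, 0 < u < d -> 0 < phi u /\ f u < 3/2 * phi u /\ phi u < 2 * f u).
  { intros u Hu. specialize (Hd1 u Hu). apply Rabs_def2 in Hd1. pose proof (Hp u ltac:(lra)).
    destruct (Rtotal_order (phi u) 0) as [Hn|[Hz|Hpp]].
    - assert (f u / phi u < 0). { unfold Rdiv. apply Rmult_pos_neg; auto. apply Rinv_lt_0_compat; auto. }
      lra.
    - rewrite Hz in Hd1. unfold Rdiv in Hd1. rewrite Rinv_0 in Hd1. lra.
    - set (q := f u / phi u) in *. assert (f u = q * phi u) by (unfold q; field; lra).
      split; auto. split; nra. }
  exists (Rmin delta d). split; [apply Rmin_pos; lra|].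
  intros a b Ha Hab Hb. pose proof (Rmin_l delta d). pose proof (Rmin_r delta d).
  destruct (K a ltac:(lra)) as [_ [K1 _]]. destruct (K b ltac:(lra)) as [_ [_ K2]].
  pose proof (Hm a b Ha Hab ltac:(lra)). lra.
Qed.

Lemma x_pos (f g x : R -> R) (xi : R) :
  f 0 = 0 -> (forall t, 0 < t -> 0 < g t) -> 0 < xi ->
  cont_on_nonneg x ->
  (forall t : R, 0 < t -> derivable_pt_lim x t (- f (x t) + g t)) ->
  x 0 = xi -> forall t, 0 <= t -> 0 < x t.
Proof.
  intros Hf0 Hg Hxi Hc Hd Hx0.
  destruct (Hc 0 ltac:(lra) xi Hxi) as [d [Hd0 Hd1]].
  assert (Near : forall s, 0 <= s < d -> 0 < x s).
  { intros s Hs. specialize (Hd1 s ltac:(lra) ltac:(rewrite Rminus_0_r, Rabs_pos_eq; lra)).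
    rewrite Hx0 in Hd1. apply Rabs_def2 in Hd1. lra. }
  assert (G := crossing (fun t => - x t) (fun t => - (- f (x t) + g t)) (d/2) 0).
  intros t Ht. destruct (Rlt_or_le t (d/2)). apply Near; lra.
  assert (- x t < 0); [|lra].
  apply G; auto.
  - intros s Hs. apply derivable_pt_lim_opp. apply Hd. lra.
  - pose proof (Near (d/2) ltac:(lra)). lra.
  - intros s Hs Hz. assert (x s = 0) by lra. rewrite H0, Hf0. pose proof (Hg s ltac:(lra)). lra.
Qed.
Lemma K_inf f F Finv : Std f F -> lim_0plus_infty F ->
  (forall u : R, 0 < u -> Finv (F u) = u) ->
  RVinf (-1) (fun t => f (Finv t)) ->
  forall eps, 0 < eps < 1 -> exists C T, 0 < C /\
    forall t, T < t -> f (Finv (eps * t)) <= C * f (Finv t).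
Proof.
  intros S H0 Hinv [_ HR] eps Heps.
  destruct (HR eps ltac:(lra) 1 ltac:(lra)) as [T HT].
  exists (Rpower eps (-1) + 1), (Rmax T 0). split.
  { unfold Rpower. pose proof (exp_pos (-1 * ln eps)). lra. }
  intros t Ht. pose proof (Rmax_l T 0). pose proof (Rmax_r T 0).
  specialize (HT t ltac:(lra)). apply Rabs_def2 in HT. simpl in HT.
  destruct (F_surj f F Finv S H0 Hinv t ltac:(lra)) as [P _].
  destruct S as [_ [Hs _]].
  pose proof (f_pos f Hs _ P).
  set (q := f (Finv (eps * t)) / f (Finv t)) in *.
  assert (f (Finv (eps * t)) = q * f (Finv t)) by (unfold q; field; lra).
  rewrite H3. apply Rmult_le_compat_r; lra.
Qed.

Lemma doubling f beta : 1 < beta -> RV0 beta f ->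
  exists d c c2, 0 < d /\ 0 < c /\ c < /2 /\ 0 < c2 /\
    forall y, 0 < y < d -> c2 * f y <= f (/2 * y) /\ f (/2 * y) <= c * f y.
Proof.
  intros Hb [Hp HR].
  set (c0 := Rpower (/2) beta).
  assert (Hc0 : 0 < c0) by (unfold c0, Rpower; apply exp_pos).
  assert (Hc1 : c0 < /2).
  { unfold c0, Rpower. rewrite ln_Rinv by lra.
    assert (Hl2 : 0 < ln 2) by (rewrite <- ln_1; apply ln_increasing; lra).
    apply Rlt_le_trans with (exp (- ln 2)); [apply exp_increasing; nra| rewrite exp_Ropp, exp_ln; lra]. }
  set (eta := Rmin ((/2 - c0)/2) (c0/2)).
  assert (He : 0 < eta) by (apply Rmin_pos; lra).
  assert (He1 : eta <= (/2 - c0)/2) by apply Rmin_l.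
  assert (He2 : eta <= c0/2) by apply Rmin_r.
  destruct (HR (/2) ltac:(lra) eta He) as [d [Hd Hd1]].
  exists d, (c0 + eta), (c0 - eta). do 4 (split; [lra|]).
  intros y Hy. specialize (Hd1 y Hy). fold c0 in Hd1. apply Rabs_def2 in Hd1.
    pose proof (Hp y ltac:(lra)).
    set (q := f (/2 * y) / f y) in *. assert (f (/2 * y) = q * f y) by (unfold q; field; lra).
    rewrite H0. split; nra.
Qed.
Lemma RInt_comp_lin_R (h : R -> R) u v a b : ex_RInt h (u*a+v) (u*b+v) ->
  RInt (fun y => u * h (u*y+v)) a b = RInt h (u*a+v) (u*b+v).
Proof. intros H. exact (@RInt_comp_lin R_CompleteNormedModule h u v a b H). Qed.
Lemma ex_RInt_comp_lin_R (h : R -> R) u v a b : ex_RInt h (u*a+v) (u*b+v) ->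
  ex_RInt (fun y => u * h (u*y+v)) a b.
Proof. intros H. exact (@ex_RInt_comp_lin R_NormedModule h u v a b H). Qed.
Lemma RInt_le_R (h k : R -> R) a b : a <= b -> ex_RInt h a b -> ex_RInt k a b -> (forall x, a < x < b -> h x <= k x) -> RInt h a b <= RInt k a b.
Proof. intros. apply RInt_le; auto. Qed.

Lemma RInt_scal_R (h : R -> R) r y d : ex_RInt h y d -> r * RInt h y d = RInt (fun w => r * h w) y d.
Proof. intros H. pose proof (@RInt_scal R_CompleteNormedModule h y d r H) as E. exact (eq_sym E). Qed.

Lemma ex_RInt_scal_R (h : R -> R) r y d : ex_RInt h y d -> ex_RInt (fun w => r * h w) y d.
Proof. intros H. exact (@ex_RInt_scal R_NormedModule h y d r H). Qed.

Lemma Ffactor f F : Std f F -> lim_0plus_infty F ->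
  forall d c, 0 < d -> 0 < c -> c < /2 ->
  (forall y, 0 < y < d -> f (/2 * y) <= c * f y) ->
  exists rho d1, 1 < rho /\ 0 < d1 /\
    forall y, 0 < y < d1 -> 0 < F y /\ rho * F y <= F (/2 * y).
Proof.
  intros S H0 d c Hd Hc Hc2 Hdb.
  pose proof S as [Hl [Hs HF]].
  set (h := fun v => / f v).
  set (r := / (2 * c)).
  assert (Hr : 1 < r).
  { unfold r. replace 1 with (/ 1) by field. apply Rinv_lt_contravar; lra. }
  assert (A : forall y, 0 < y < d -> r * (F y - F d) <= F (/2 * y) - F (/2 * d)).
  { intros y Hy.
    rewrite (F_diff f F S) by lra. rewrite (F_diff f F S (/2*y) (/2*d)) by lra.
    assert (E : RInt (fun w => / f w) (/2 * y) (/2 * d) =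
                RInt (fun z => /2 * / f (/2 * z + 0)) y d).
    { transitivity (RInt (fun w => / f w) (/2*y+0) (/2*d+0)). f_equal; ring.
      symmetry. apply (RInt_comp_lin_R (fun w => / f w) (/2) 0 y d).
      apply exR; auto; lra. }
    rewrite E.
    rewrite (RInt_scal_R (fun w => / f w) r y d) by (apply exR; auto; lra).
    apply RInt_le_R; [lra| | |].
    - apply (ex_RInt_scal_R (fun w => / f w) r). apply exR; auto; lra.
    - apply (ex_RInt_comp_lin_R (fun w => / f w)). apply exR; auto; lra.
    - intros z Hz.
      rewrite Rplus_0_r.
      pose proof (f_pos f Hs z ltac:(lra)).
      pose proof (f_pos f Hs (/2 * z) ltac:(lra)).
      pose proof (Hdb z ltac:(lra)).
      replace (r * / f z) with (/ (2 * c * f z)) by (unfold r; field; lra).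
      replace (/ 2 * / f (/ 2 * z)) with (/ (2 * f (/ 2 * z))) by (field; lra).
      apply Rinv_le_contravar; nra. }
  set (K0 := r * F d - F (/2 * d)).
  destruct (H0 (Rmax (2 * K0 / (r - 1)) 0)) as [d' [Hd' Hd'1]].
  exists ((r + 1) / 2), (Rmin d d'). split; [lra|]. split; [apply Rmin_pos; lra|].
  intros y Hy. pose proof (Rmin_l d d'). pose proof (Rmin_r d d').
  specialize (Hd'1 y ltac:(lra)).
  pose proof (Rmax_l (2 * K0 / (r - 1)) 0). pose proof (Rmax_r (2 * K0 / (r - 1)) 0).
  specialize (A y ltac:(lra)).
  split; [lra|].
  assert (K0 < (r - 1) / 2 * F y).
  { assert (H5 : 2 * K0 / (r - 1) < F y) by lra.
    apply Rmult_lt_compat_l with (r := (r - 1) / 2) in H5; [|lra].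
    replace ((r - 1) / 2 * (2 * K0 / (r - 1))) with K0 in H5 by (field; lra). lra. }
  unfold K0 in *. lra.
Qed.

Lemma iter_up (F : R -> R) rho d1 : 0 < rho ->
  (forall y, 0 < y < d1 -> 0 < F y /\ rho * F y <= F (/2 * y)) ->
  forall k y, 0 < y < d1 -> rho ^ k * F y <= F (y / 2 ^ k).
Proof.
  intros Hr H. induction k; intros y Hy.
  - simpl. replace (y / 1) with y by field. lra.
  - assert (P : 0 < 2 ^ k) by (apply pow_lt; lra).
    replace (y / 2 ^ S k) with (/2 * (y / 2 ^ k)) by (simpl; field; lra).
    assert (Q : 0 < y / 2 ^ k <= y).
    { split. apply Rdiv_lt_0_compat; lra.
      assert (1 <= 2 ^ k) by (apply pow_R1_Rle; lra).
      unfold Rdiv. rewrite <- (Rmult_1_r y) at 2. apply Rmult_le_compat_l; [lra|].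
      replace 1 with (/1) by field. apply Rinv_le_contravar; lra. }
    destruct (H (y / 2 ^ k) ltac:(lra)) as [_ H2].
    specialize (IHk y Hy). simpl.
    assert (rho * (rho ^ k * F y) <= rho * F (y / 2 ^ k)) by (apply Rmult_le_compat_l; lra).
    lra.
Qed.

Lemma iter_down (f : R -> R) c2 d : 0 < c2 ->
  (forall y, 0 < y < d -> c2 * f y <= f (/2 * y)) ->
  (forall y, 0 < y -> 0 < f y) ->
  forall k y, 0 < y < d -> c2 ^ k * f y <= f (y / 2 ^ k).
Proof.
  intros Hc H Hp. induction k; intros y Hy.
  - simpl. replace (y / 1) with y by field. lra.
  - assert (P : 0 < 2 ^ k) by (apply pow_lt; lra).
    replace (y / 2 ^ S k) with (/2 * (y / 2 ^ k)) by (simpl; field; lra).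
    assert (Q : 0 < y / 2 ^ k <= y).
    { split. apply Rdiv_lt_0_compat; lra.
      assert (1 <= 2 ^ k) by (apply pow_R1_Rle; lra).
      unfold Rdiv. rewrite <- (Rmult_1_r y) at 2. apply Rmult_le_compat_l; [lra|].
      replace 1 with (/1) by field. apply Rinv_le_contravar; lra. }
    specialize (H (y / 2 ^ k) ltac:(lra)).
    specialize (IHk y Hy). simpl.
    assert (c2 * (c2 ^ k * f y) <= c2 * f (y / 2 ^ k)) by (apply Rmult_le_compat_l; lra).
    lra.
Qed.

Lemma bernoulli rho : 1 < rho -> forall k, 1 + INR k * (rho - 1) <= rho ^ k.
Proof.
  intros Hr. induction k.
  - simpl. lra.
  - rewrite S_INR. simpl. pose proof (pos_INR k).
    assert (rho * (1 + INR k * (rho - 1)) <= rho * rho ^ k) by (apply Rmult_le_compat_l; lra).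
    assert (0 <= INR k * ((rho - 1) * (rho - 1))) by (apply Rmult_le_pos; nra). nra.
Qed.
Lemma K_0 f F Finv beta : Std f F -> lim_0plus_infty F ->
  (forall u : R, 0 < u -> Finv (F u) = u) ->
  (exists d1, 0 < d1 /\ forall a b, 0 < a -> a <= b -> b < d1 -> f a <= 3 * f b) ->
  1 < beta -> RV0 beta f ->
  forall eps, 0 < eps < 1 -> exists C T, 0 < C /\
    forall t, T < t -> f (Finv (eps * t)) <= C * f (Finv t).
Proof.
  intros S H0 Hinv [dq [Hdq Hq]] Hb HRV eps Heps.
  pose proof S as [Hl [Hs HF]].
  destruct (doubling f beta Hb HRV) as [d [c [c2 [Hd [Hc [Hc' [Hc2 Hdb]]]]]]].
  destruct (Ffactor f F S H0 d c Hd Hc Hc' (fun y Hy => proj2 (Hdb y Hy))) as [rho [d1 [Hr [Hd1 Hf]]]].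
  destruct (INR_unbounded ((/ eps) / (rho - 1))) as [k Hk].
  assert (Hrk : / eps < rho ^ k).
  { pose proof (bernoulli rho Hr k).
    assert (/ eps < INR k * (rho - 1)).
    { apply Rmult_lt_compat_r with (r := rho - 1) in Hk; [|lra].
      replace (/ eps / (rho - 1) * (rho - 1)) with (/ eps) in Hk by (field; lra). lra. }
    lra. }
  assert (Hrk2 : 1 < rho ^ k * eps).
  { apply Rmult_lt_compat_r with (r := eps) in Hrk; [|lra].
    replace (/ eps * eps) with 1 in Hrk by (field; lra). lra. }
  set (y := Rmin dq (Rmin d d1)).
  assert (Hy : 0 < y) by (apply Rmin_pos; [lra| apply Rmin_pos; lra]).
  assert (Hy1 : y <= dq) by apply Rmin_l.
  assert (Hy2 : y <= d) by (pose proof (Rmin_r dq (Rmin d d1)); pose proof (Rmin_l d d1); unfold y in *; lra).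
  assert (Hy3 : y <= d1) by (pose proof (Rmin_r dq (Rmin d d1)); pose proof (Rmin_r d d1); unfold y in *; lra).
  destruct (Finv_small f F Finv S H0 Hinv y Hy) as [T0 HT0].
  assert (Hc2k : 0 < c2 ^ k) by (apply pow_lt; lra).
  exists (3 / c2 ^ k), (Rmax (T0 / eps) 0). split.
  { apply Rdiv_lt_0_compat; lra. }
  intros t Ht. pose proof (Rmax_l (T0 / eps) 0). pose proof (Rmax_r (T0 / eps) 0).
  assert (Het : T0 < eps * t).
  { assert (Q : eps * (T0 / eps) < eps * t) by (apply Rmult_lt_compat_l; lra).
    replace (eps * (T0 / eps)) with T0 in Q by (field; lra). lra. }
  specialize (HT0 _ Het).
  set (b := Finv (eps * t)) in *. set (a := Finv t).
  destruct (F_surj f F Finv S H0 Hinv (eps * t) ltac:(nra)) as [Pb Eb]. fold b in Pb, Eb.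
  destruct (F_surj f F Finv S H0 Hinv t ltac:(lra)) as [Pa Ea]. fold a in Pa, Ea.
  assert (Hab : a <= b).
  { destruct (Rle_or_lt a b); auto. pose proof (F_mono f F S b a Pb ltac:(lra)). nra. }
  assert (P2 : 0 < 2 ^ k) by (apply pow_lt; lra).
  assert (Pbk : 0 < b / 2 ^ k) by (apply Rdiv_lt_0_compat; lra).
  assert (Hba : b / 2 ^ k <= a).
  { destruct (Rle_or_lt (b / 2 ^ k) a); auto.
    pose proof (F_mono f F S a (b / 2 ^ k) Pa ltac:(lra)).
    pose proof (iter_up F rho d1 ltac:(lra) Hf k b ltac:(lra)).
    rewrite Eb, Ea in *. nra. }
  pose proof (Hq (b / 2 ^ k) a Pbk Hba ltac:(lra)).
  pose proof (iter_down f c2 d Hc2 (fun y Hy => proj1 (Hdb y Hy)) (f_pos f Hs) k b ltac:(lra)).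
  pose proof (f_pos f Hs a Pa).
  apply Rmult_le_reg_l with (r := c2 ^ k); [lra|].
  replace (c2 ^ k * (3 / c2 ^ k * f a)) with (3 * f a) by (field; lra). lra.
Qed.
Theorem theorem3
  (f g : R -> R) (xi : R) (F Finv : R -> R) (x : R -> R)
  (* standing assumptions *)
  (Hf_lip : loc_lipschitz f)
  (Hf0 : f 0 = 0)
  (Hf_sign : forall u : R, u <> 0 -> 0 < u * f u)
  (Hg_cont : cont_on_nonneg g)
  (Hg_pos : forall t : R, 0 < t -> 0 < g t)
  (Hxi : 0 < xi)
  (HF_def : forall u : R, 0 < u ->
     exists pr : Riemann_integrable (fun v => / f v) u 1, F u = RiemannInt pr)
  (HF_0 : lim_0plus_infty F)
  (HFinv : forall u : R, 0 < u -> Finv (F u) = u)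
  (* x is the continuous solution of x' = -f(x) + g, x(0) = xi *)
  (Hx_cont : cont_on_nonneg x)
  (Hx_ode : forall t : R, 0 < t -> derivable_pt_lim x t (- f (x t) + g t))
  (Hx0 : x 0 = xi)
  (* further hypotheses *)
  (Hphi : exists (delta : R) (phi : R -> R), 0 < delta /\
     (forall a b : R, 0 < a -> a <= b -> b < delta -> phi a <= phi b) /\
     lim_0plus (fun u => f u / phi u) 1)
  (Hg_big : lim_infty_infty (fun t => g t / f (Finv t)))
  (Hx_lim : lim_infty x 0)
  (Hcase : (exists beta : R, 1 < beta /\ RV0 beta f) \/
           RVinf (-1) (fun t => f (Finv t))) :
  lim_infty (fun t => F (x t) / t) 0.
Proof.
  intros eps Heps.
  assert (S : Std f F) by (split; [auto| split; [auto| apply F_RInt; auto]]).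
  pose proof (f_pos f Hf_sign) as Hp.
  pose proof (x_pos f g x xi Hf0 Hg_pos Hxi Hx_cont Hx_ode Hx0) as Hxp.
  pose proof (QM f Hp Hphi) as HQ.
  set (e := Rmin (eps/2) (1/2)).
  assert (He : 0 < e) by (apply Rmin_pos; lra).
  assert (He1 : e <= eps/2) by apply Rmin_l.
  assert (He2 : e <= 1/2) by apply Rmin_r.
  assert (HK : exists C T, 0 < C /\ forall t, T < t -> f (Finv (e * t)) <= C * f (Finv t)).
  { destruct Hcase as [[beta [Hb HR]]|HR].
    - apply (K_0 f F Finv beta S HF_0 HFinv HQ Hb HR). lra.
    - apply (K_inf f F Finv S HF_0 HFinv HR). lra. }
  destruct HK as [C [T1 [HC HT1]]].
  destruct HQ as [dq [Hdq Hq]].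
  destruct (Hg_big (3 * C)) as [T2 HT2].
  destruct (Finv_small f F Finv S HF_0 HFinv dq Hdq) as [T3 HT3].
  destruct (Hx_lim 1 ltac:(lra)) as [T4 HT4].
  set (a0 := Rmax T1 (Rmax T2 (Rmax (T3 / e) (Rmax T4 0))) + 1).
  assert (A1 : T1 < a0) by (pose proof (Rmax_l T1 (Rmax T2 (Rmax (T3 / e) (Rmax T4 0)))); unfold a0; lra).
  pose proof (Rmax_r T1 (Rmax T2 (Rmax (T3 / e) (Rmax T4 0)))).
  pose proof (Rmax_l T2 (Rmax (T3 / e) (Rmax T4 0))).
  pose proof (Rmax_r T2 (Rmax (T3 / e) (Rmax T4 0))).
  pose proof (Rmax_l (T3 / e) (Rmax T4 0)).
  pose proof (Rmax_r (T3 / e) (Rmax T4 0)).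
  pose proof (Rmax_l T4 0). pose proof (Rmax_r T4 0).
  assert (A2 : T2 < a0) by (unfold a0; lra).
  assert (A3 : T3 / e < a0) by (unfold a0; lra).
  assert (A4 : T4 < a0) by (unfold a0; lra).
  assert (A5 : 0 < a0) by (unfold a0; lra).
  clearbody a0.
  set (w := fun t => F (x t) - e * t).
  set (w' := fun t => - / f (x t) * (- f (x t) + g t) - e).
  assert (Dw : forall t, a0 <= t -> derivable_pt_lim w t (w' t)).
  { intros t Ht.
    assert (D1 : derivable_pt_lim (fun s => F (x s)) t (- / f (x t) * (- f (x t) + g t))).
    { apply (derivable_pt_lim_comp x F). apply Hx_ode; lra.
      apply (F_deriv f F S). apply Hxp; lra. }
    assert (D2 : derivable_pt_lim (fun s => e * s) t e).
    { apply is_derive_Reals. auto_derive; auto. ring. }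
    exact (derivable_pt_lim_minus _ _ t _ _ D1 D2). }
  set (m := Rmax (w a0) 0 + 1).
  assert (Hm1 : w a0 < m) by (pose proof (Rmax_l (w a0) 0); unfold m; lra).
  assert (Hm2 : 0 < m) by (pose proof (Rmax_r (w a0) 0); unfold m; lra).
  assert (Hneg : forall t, a0 <= t -> w t = m -> w' t < 0).
  { intros t Ht Hw. unfold w in Hw. unfold w'.
    assert (Pt : 0 < x t) by (apply Hxp; lra).
    assert (Het : T3 < e * t).
    { assert (Q : e * (T3 / e) < e * t) by (apply Rmult_lt_compat_l; lra).
      replace (e * (T3 / e)) with T3 in Q by (field; lra). lra. }
    destruct (HT3 _ Het) as [Pb Pb2].
    destruct (F_surj f F Finv S HF_0 HFinv (e * t) ltac:(nra)) as [_ Eb].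
    destruct (F_surj f F Finv S HF_0 HFinv t ltac:(lra)) as [Pa _].
    assert (Hxb : x t <= Finv (e * t)).
    { destruct (Rle_or_lt (x t) (Finv (e * t))); auto.
      pose proof (F_mono f F S (Finv (e * t)) (x t) Pb ltac:(lra)). lra. }
    pose proof (Hq (x t) (Finv (e * t)) Pt Hxb Pb2).
    pose proof (HT1 t ltac:(lra)).
    specialize (HT2 t ltac:(lra)).
    pose proof (Hp _ Pa) as Pfa. pose proof (Hp _ Pt) as Pfx.
    assert (Hg3 : 3 * C * f (Finv t) < g t).
    { apply Rmult_lt_compat_r with (r := f (Finv t)) in HT2; [|lra].
      replace (g t / f (Finv t) * f (Finv t)) with (g t) in HT2 by (field; lra). lra. }
    assert (Hgx : f (x t) < g t) by nra.
    replace (- / f (x t) * (- f (x t) + g t) - e) with (- ((g t - f (x t)) / f (x t)) - e)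
      by (field; lra).
    assert (0 < (g t - f (x t)) / f (x t)) by (apply Rdiv_lt_0_compat; lra).
    lra. }
  pose proof (crossing w w' a0 m Dw Hm1 Hneg) as Cr.
  exists (Rmax a0 (2 * m / eps)). intros t Ht.
  pose proof (Rmax_l a0 (2 * m / eps)). pose proof (Rmax_r a0 (2 * m / eps)).
  specialize (Cr t ltac:(lra)). unfold w in Cr.
  assert (Pt : 0 < x t) by (apply Hxp; lra).
  specialize (HT4 t ltac:(lra)). rewrite Rminus_0_r in HT4. apply Rabs_def2 in HT4.
  assert (F0 : 0 <= F (x t)) by (apply (F_nonneg f F S); lra).
  assert (Hmt : 2 * m < eps * t).
  { assert (Q : eps * (2 * m / eps) < eps * t) by (apply Rmult_lt_compat_l; lra).
    replace (eps * (2 * m / eps)) with (2 * m) in Q by (field; lra). lra. }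
  rewrite Rminus_0_r. rewrite Rabs_pos_eq by (apply Rdiv_le_0_compat; lra).
  apply Rmult_lt_reg_r with t; [lra|].
  replace (F (x t) / t * t) with (F (x t)) by (field; lra).
  assert (e * t <= eps / 2 * t) by (apply Rmult_le_compat_r; lra).
  lra.
Qed.
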